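(* Let $A$ be a commutative ring and $\sigma$ a hereditary torsion theory on $A$-modules. If $A$ is totally $\sigma$-artinian, then every finitely generated $A$-module is totally $\sigma$-artinian.
   Context: $\mathcal{L}(\sigma)$ is the Gabriel filter of $\sigma$. An $A$-module $M$ is totally $\sigma$-artinian if for every descending chain of submodules $N_1\supseteq N_2\supseteq\cdots$ there exist $m$ and $\mathfrak{h}\in\mathcal{L}(\sigma)$ with $N_m\mathfrak{h}\subseteq N_s$ for all $s\ge m$; the ring $A$ is totally $\sigma$-artinian if $A$ is so as an $A$-module. *)

(* Defs.v *)
From mathcomp Require Import all_boot all_order all_algebra.
Set Implicit Arguments. Unset Strict Implicit. Unset Printing Implicit Defensive.
Import GRing.Theory.
Local Open Scope ring_scope.

Definition is_ideal (R : comPzRingType) (I : R -> Prop) : Prop :=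
  [/\ I 0, (forall x y, I x -> I y -> I (x - y)) & (forall a x, I x -> I (a * x))].

Definition colon (R : comPzRingType) (I : R -> Prop) (a : R) : R -> Prop :=
  fun r => I (r * a).

Definition gabriel_filter (R : comPzRingType) (F : (R -> Prop) -> Prop) : Prop :=
  [/\ (forall I, F I -> is_ideal I),
      F (fun _ => True),
      (forall I J, F I -> is_ideal J -> (forall x, I x -> J x) -> F J),
      (forall I a, F I -> F (colon I a))
    & (forall I J, F I -> is_ideal J -> (forall a, I a -> F (colon J a)) -> F J)].

(* A hereditary torsion theory sigma on A-modules, represented by its Gabriel
   filter L(sigma) (the bijective correspondence of Stenström VI.5). *)
Record htt (R : comPzRingType) := Htt {
  Lsigma : (R -> Prop) -> Prop;
  Lsigma_gabriel : gabriel_filter Lsigma }.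

Definition is_submodule (R : comPzRingType) (M : lmodType R) (N : M -> Prop) : Prop :=
  [/\ N 0, (forall x y, N x -> N y -> N (x - y)) & (forall (a : R) x, N x -> N (a *: x))].

(* N h ⊆ N' : the submodule generated by products a x (x in N, a in h) lies in N'. *)
Definition mul_sub (R : comPzRingType) (M : lmodType R) (N : M -> Prop)
  (h : R -> Prop) (N' : M -> Prop) : Prop :=
  forall x a, N x -> h a -> N' (a *: x).

Definition totally_sigma_artinian (R : comPzRingType) (sigma : htt R)
  (M : lmodType R) : Prop :=
  forall N : nat -> M -> Prop,
    (forall k, is_submodule (N k)) ->
    (forall k x, N k.+1 x -> N k x) ->
    exists m : nat, exists2 h : R -> Prop, Lsigma sigma h &
      forall s, (m <= s)%N -> mul_sub (N m) h (N s).

Definition totally_sigma_artinian_ring (R : comPzRingType) (sigma : htt R) : Prop :=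
  totally_sigma_artinian sigma R^o.

Definition finitely_generated (R : comPzRingType) (M : lmodType R) : Prop :=
  exists s : seq M, forall x : M,
    exists c : 'I_(size s) -> R, x = \sum_(i < size s) c i *: s`_i.

(* Main.v *)
Require Import Defs.
From mathcomp Require Import all_boot all_order all_algebra.
Set Implicit Arguments. Unset Strict Implicit. Unset Printing Implicit Defensive.
Import GRing.Theory.
Local Open Scope ring_scope.

Lemma chain_mono (T : Type) (N : nat -> T -> Prop) :
  (forall k x, N k.+1 x -> N k x) -> forall k l x, (k <= l)%N -> N l x -> N k x.
Proof.
move=> Hd k l x /subnK <-; elim: (l - k)%N => [|d IH] //= Hx.
apply: IH; apply: Hd; by rewrite addSn in Hx.
Qed.

Lemma subm_add (R : comPzRingType) (M : lmodType R) (N : M -> Prop) x y :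
  is_submodule N -> N x -> N y -> N (x + y).
Proof.
case=> [N0 ND NZ] Hx Hy.
have -> : x + y = x - (0 - y) by rewrite sub0r opprK.
by apply: (ND) => //; apply: (ND).
Qed.

Lemma colon_ideal (R : comPzRingType) (I : R -> Prop) b :
  is_ideal I -> is_ideal (colon I b).
Proof.
case=> [I0 ID IM]; split; rewrite /colon.
- by rewrite mul0r.
- by move=> x y Hx Hy; rewrite mulrBl; apply: (ID).
- by move=> a x Hx; rewrite -mulrA; apply: (IM).
Qed.

Definition P (R : comPzRingType) (M : lmodType R) (s : seq M) n (y : M) :=
  exists c : 'I_n -> R, y = \sum_(i < n) c i *: s`_i.

Lemma P0 (R : comPzRingType) (M : lmodType R) (s : seq M) n : P s n 0.
Proof. by exists (fun _ => 0); rewrite big1 // => i _; rewrite scale0r. Qed.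

Lemma PB (R : comPzRingType) (M : lmodType R) (s : seq M) n x y :
  P s n x -> P s n y -> P s n (x - y).
Proof.
move=> [c1 ->] [c2 ->]; exists (fun i => c1 i - c2 i).
by rewrite -sumrB; apply: eq_bigr => i _; rewrite scalerBl.
Qed.

Lemma PZ (R : comPzRingType) (M : lmodType R) (s : seq M) n a x :
  P s n x -> P s n (a *: x).
Proof.
move=> [c ->]; exists (fun i => a * c i).
by rewrite scaler_sumr; apply: eq_bigr => i _; rewrite scalerA.
Qed.

Lemma key (A : comPzRingType) (sigma : htt A) :
  totally_sigma_artinian_ring sigma ->
  forall (M : lmodType A) (s : seq M) n (N : nat -> M -> Prop),
    (forall k, is_submodule (N k)) ->
    (forall k x, N k.+1 x -> N k x) ->
    (forall k x, N k x -> P s n x) ->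
    exists m : nat, exists2 h : A -> Prop, Lsigma sigma h &
      forall t, (m <= t)%N -> mul_sub (N m) h (N t).
Proof.
move=> HA M s n; case: (Lsigma_gabriel sigma) => [Lid LT Lup Lcol Lgl].
elim: n => [|n IH] N Nsub Ndec NP.
  exists 0%N; exists (fun _ => True) => // t _ x a Nx _.
  have [c ->] := NP _ _ Nx; rewrite big_ord0 scaler0.
  by case: (Nsub t).
pose N' := fun k y => N k y /\ P s n y.
have N'sub : forall k, is_submodule (N' k).
  move=> k; case: (Nsub k) => [N0 ND NZ]; split.
  - by split => //; apply: P0.
  - by move=> x y [Hx Px] [Hy Py]; split; [apply: (ND) | apply: PB].
  - by move=> a x [Hx Px]; split; [apply: (NZ) | apply: PZ].
have [m1 [h1 Lh1 H1]] : exists m : nat, exists2 h : A -> Prop, Lsigma sigma h &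
      forall t, (m <= t)%N -> mul_sub (N' m) h (N' t).
  apply: IH => //; first by move=> k x [Hx Px]; split => //; apply: Ndec.
  by move=> k x [].
pose x0 := s`_n.
pose I := fun k (c : A^o) => exists2 p, P s n p & N k (p + c *: x0).
have Isub : forall k, is_submodule (I k).
  move=> k; case: (Nsub k) => [N0 ND NZ]; split.
  - by exists 0; [apply: P0 | rewrite scale0r addr0].
  - move=> c1 c2 [p1 Pp1 H1'] [p2 Pp2 H2']; exists (p1 - p2); first by apply: PB.
    have -> : p1 - p2 + (c1 - c2) *: x0 = (p1 + c1 *: x0) - (p2 + c2 *: x0).
      by rewrite scalerBl opprD addrACA.
    by apply: (ND).
  - move=> a c [p Pp Hp]; exists (a *: p); first by apply: PZ.
    have -> : a *: p + (a *: c : A^o) *: x0 = a *: (p + c *: x0).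
      by rewrite scalerDr scalerA.
    by apply: (NZ).
have Idec : forall k c, I k.+1 c -> I k c.
  by move=> k c [p Pp Hp]; exists p => //; apply: Ndec.
have [m2 [h2 Lh2 H2]] := HA I Isub Idec.
pose m := maxn m1 m2.
pose J := fun r => forall t, (m <= t)%N -> forall y, N m y -> N t (r *: y).
have Jid : is_ideal J.
  split.
  - by move=> t _ y _; rewrite scale0r; case: (Nsub t).
  - move=> a b Ha Hb t Ht y Hy; rewrite scalerBl.
    by case: (Nsub t) => [_ ND _]; apply: (ND); [apply: Ha | apply: Hb].
  - move=> a r Hr t Ht y Hy; rewrite -scalerA.
    by case: (Nsub t) => [_ _ NZ]; apply: (NZ); apply: Hr.
exists m, J; last by move=> t Ht y r Ny Jr; exact: Jr t Ht y Ny.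
apply: (Lgl h1 J Lh1 Jid) => b hb.
apply: (Lup h2) => //; first by apply: colon_ideal.
move=> r hr t Ht y Ny; rewrite /colon.
have m1t : (m1 <= t)%N by apply: leq_trans Ht; apply: leq_maxl.
have m2t : (m2 <= t)%N by apply: leq_trans Ht; apply: leq_maxr.
have [c Ey] := NP _ _ Ny.
rewrite big_ord_recr /= in Ey.
set p := \sum_(i < n) _ in Ey.
set cc := c ord_max in Ey.
have Pp : P s n p by exists (fun i => c (widen_ord (leqnSn n) i)).
have Icm : I m2 cc.
  exists p => //; apply: (chain_mono Ndec (l := m)); first exact: leq_maxr.
  by rewrite -Ey.
have [p' Pp' Hz] := H2 t m2t cc r Icm hr.
set z := p' + _ in Hz.
have Nmry : N m (r *: y) by case: (Nsub m) => [_ _ NZ]; apply: (NZ).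
have Hw : N' m1 (r *: y - z).
  split.
    case: (Nsub m1) => [_ ND _]; apply: (ND).
      by apply: (chain_mono Ndec (l := m)) => //; apply: leq_maxl.
    by apply: (chain_mono Ndec (l := t)).
  have -> : r *: y - z = r *: p - p'.
    rewrite Ey /z /= scalerDr scalerA opprD addrACA subrr addr0.
    by [].
  by apply: PB => //; apply: PZ.
have [Hbw _] := H1 t m1t _ b Hw hb.
have Hbz : N t (b *: z) by case: (Nsub t) => [_ _ NZ]; apply: (NZ).
have -> : (r * b) *: y = b *: (r *: y - z) + b *: z.
  by rewrite -scalerDr subrK scalerA mulrC.
by apply: subm_add.
Qed.

Theorem mainTheorem12 (A : comPzRingType) (sigma : htt A) :
  totally_sigma_artinian_ring sigma ->
  forall M : lmodType A, finitely_generated M -> totally_sigma_artinian sigma M.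
Proof.
move=> HA M [s Hs] N Nsub Ndec.
by apply: (@key A sigma HA M s (size s)) => // k y _; apply: Hs.
Qed.
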